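(* Let $a,c$ be positive integers and $\vec k=(a,1,c)$. Then $\mathrm{depth}(\pi)=\mathrm{bounce}(\pi)$ for every $\pi\in\mathcal D_{\vec k}$, and hence $$\sum_{\pi\in\mathcal D_{\vec k}}q^{\mathrm{area}(\pi)}t^{\mathrm{depth}(\pi)}=\sum_{\pi\in\mathcal D_{\vec k}}q^{\mathrm{area}(\pi)}t^{\mathrm{bounce}(\pi)}.$$
   Context: For $\vec k=(k_1,\dots,k_\ell)$ put $|\vec k|=\sum k_i$, $N=|\vec k|+\ell$. A $\vec k$-Dyck path is a word $\pi=\pi_1\cdots\pi_N$ containing the letters $S^{k_1},\dots,S^{k_\ell}$ exactly once each and in this order, together with $|\vec k|$ letters $W$, such that all starting ranks are nonnegative, where $r_1=0$, $r_{i+1}=r_i+k_j$ if $\pi_i=S^{k_j}$ and $r_{i+1}=r_i-1$ if $\pi_i=W$. $\mathcal D_{\vec k}$ is the set of such paths. $\mathrm{area}(\pi)=\sum_j a_j$ where $a_j$ is the starting rank of $S^{k_j}$. Filling algorithms: in a tableau of $\ell$ top-justified columns, column $i$ having $k_i+1$ cells, place $1$ at the top of column 1; for $i=2,\dots,N$, call an entry active if it is currently the bottom entry of a column $i'$ not yet containing $k_{i'}+1$ entries; if $\pi_i=W$ place $i$ immediately below the smallest active entry (algorithm $\eta$) resp. the largest active entry (algorithm $\eta_*$); otherwise place $i$ at the top of the first empty column. Ranking: for a filled tableau $F$, column 1 gets ranks $0,\dots,k_1$ top to bottom; for $i\ge2$, if the top entry of column $i$ of $F$ is $A+1$ and $A$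 has rank $\alpha$, column $i$ gets ranks $\alpha,\dots,\alpha+k_i$ top to bottom. $\mathrm{bounce}(\pi)$ is the sum of the first-row ranks for $F=\eta(\pi)$, and $\mathrm{depth}(\pi)$ is the sum of the first-row ranks for $F=\eta_*(\pi)$. *)

(* Defs.v *)
From mathcomp Require Import all_boot all_order all_algebra.
Set Implicit Arguments. Unset Strict Implicit. Unset Printing Implicit Defensive.
Import GRing.Theory Num.Theory.

(* A word over the alphabet {W} U {S^{k_j}} is a seq (option nat):
   None = W, Some j = S^{k_j} (j is 0-indexed, so Some 0 = S^{k_1}).
   A vector k = (k_1,...,k_l) is a seq nat. *)

Definition letter := option nat.

Definition sizek (k : seq nat) : nat := sumn k.
Definition Nk (k : seq nat) : nat := sumn k + size k.

Definition rstep (k : seq nat) (x : letter) : int :=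
  match x with None => (-1)%R | Some j => (nth 0 k j)%:Z end.

(* starting rank of the letter at 0-indexed position i (i.e. r_{i+1}) *)
Definition start_rank (k : seq nat) (w : seq letter) (i : nat) : int :=
  foldr (fun x acc => (rstep k x + acc)%R) 0%R (take i w).

(* k-Dyck path: the S letters are S^{k_1},...,S^{k_l}, each exactly once
   and in this order; exactly |k| letters W; all starting ranks >= 0. *)
Definition is_dyck (k : seq nat) (w : seq letter) : bool :=
  [&& pmap id w == iota 0 (size k),
      count (pred1 None) w == sizek k &
      all (fun i => (0 <= start_rank k w i)%R) (iota 0 (size w))].

Definition area (k : seq nat) (w : seq letter) : nat :=
  sumn [seq absz (start_rank k w i) | i <- iota 0 (size w) & nth None w i != None].

(* The set D_k, as a duplicate-free list, obtained by enumerating words of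
   length N over the finite alphabet {W} U {S^{k_j} : j < l}. *)
Definition word_of (k : seq nat) (t : (Nk k).-tuple (option 'I_(size k)))
  : seq letter := map (omap (@nat_of_ord _)) t.

Definition Dyck_words (k : seq nat) : seq (seq letter) :=
  [seq word_of t | t <- enum {: (Nk k).-tuple (option 'I_(size k))}
                 & is_dyck k (word_of t)].

(* A tableau is a seq of l columns, each column listed top to bottom. *)
Definition tableau := seq (seq nat).

(* column j is active: nonempty and not yet containing k_j + 1 entries;
   its active entry is its bottom entry *)
Definition active (k : seq nat) (F : tableau) (j : nat) : bool :=
  (0 < size (nth [::] F j)) && (size (nth [::] F j) < (nth 0 k j).+1).

Definition bottom (F : tableau) (j : nat) : nat := last 0 (nth [::] F j).

Definition best_col (better : nat -> nat -> bool) (F : tableau) (js : seq nat)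
  : option nat :=
  foldl (fun acc j => match acc with
                      | None => Some j
                      | Some j' => if better (bottom F j) (bottom F j')
                                   then Some j else Some j'
                      end) None js.

(* one step: place entry i according to letter x.
   largest = false : algorithm eta (smallest active entry)
   largest = true  : algorithm eta_* (largest active entry) *)
Definition fill_step (largest : bool) (k : seq nat) (F : tableau)
  (i : nat) (x : letter) : tableau :=
  match x with
  | None =>
      let better := if largest then (fun u v => v < u) else (fun u v => u < v) in
      match best_col better F [seq j <- iota 0 (size k) | active k F j] with
      | Some j => set_nth [::] F j (rcons (nth [::] F j) i)
      | None => F
      end
  | Some _ =>
      let j := find (fun c : seq nat => size c == 0) F in
      set_nth [::] F j [:: i]
  end.

(* 1 at the top of column 1; then letters pi_2 ... pi_N placed as i = 2..N *)
Definition fill (largest : bool) (k : seq nat) (w : seq letter) : tableau :=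
  let F0 := set_nth [::] (nseq (size k) [::]) 0 [:: 1] in
  foldl (fun F ix => fill_step largest k F ix.1 ix.2) F0
        (zip (iota 2 (size w).-1) (behead w)).

(* first-row ranks of the columns, computed column by column:
   column 1 gets 0; column j (top entry A+1, A of rank alpha) gets alpha,
   where the rank of A, located in column j' at (0-indexed) height p,
   is (first-row rank of column j') + p. *)
Definition top_ranks (F : tableau) : seq nat :=
  foldl (fun rs j =>
           if j == 0 then rcons rs 0 else
           let A := (head 0 (nth [::] F j)).-1 in
           let j' := find (fun c : seq nat => A \in c) F in
           rcons rs (nth 0 rs j' + index A (nth [::] F j')))
        [::] (iota 0 (size F)).

Definition bounce (k : seq nat) (w : seq letter) : nat :=
  sumn (top_ranks (fill false k w)).

Definition depth (k : seq nat) (w : seq letter) : nat :=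
  sumn (top_ranks (fill true k w)).

(* Main.v *)
Require Import Defs.
From mathcomp Require Import all_boot all_order all_algebra.
From mathcomp Require Import zify.
Import GRing.Theory.

Definition G lg k F s (l : seq letter) :=
  foldl (fun F ix => fill_step lg k F ix.1 ix.2) F (zip (iota s (size l)) l).

Lemma G_cons lg k F s x l : G lg k F s (x :: l) = G lg k (fill_step lg k F s x) s.+1 l.
Proof. by []. Qed.

Lemma G_cat lg k F s l1 l2 :
  G lg k F s (l1 ++ l2) = G lg k (G lg k F s l1) (s + size l1) l2.
Proof.
elim: l1 F s => [|x l1 IH] F s; first by rewrite addn0.
by rewrite cat_cons !G_cons IH /= addSnnS.
Qed.

Lemma fill_cons lg k x l :
  fill lg k (x :: l) = G lg k (set_nth [::] (nseq (size k) [::]) 0 [:: 1]) 2 l.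
Proof. by []. Qed.

Lemma idx_iota m n i : i < n -> index (m + i) (iota m n) = i.
Proof.
elim: n m i => [|n IH] m [|i] //= h; first by rewrite addn0 eqxx.
have -> : (m == m + i.+1) = false by apply/negbTE; lia.
by rewrite -addSnnS IH.
Qed.

Lemma last_iota x m n : last x (iota m n.+1) = m + n.
Proof.
elim: n m x => [|n IH] m x; first by rewrite /= addn0.
by change (last m (iota m.+1 n.+1) = m + n.+1); rewrite IH addSnnS.
Qed.

Lemma idx_iota2 m n y : m <= y < m + n -> index y (iota m n) = y - m.
Proof. move=> h; rewrite -{1}(subnKC (_ : m <= y)) ?idx_iota //; lia. Qed.

Lemma pmap_split (w : seq letter) j s : pmap id w = j :: s ->
  exists n w', w = nseq n None ++ Some j :: w' /\ pmap id w' = s.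
Proof.
elim: w => [|[y|] w IH] //=.
  by case=> -> <-; exists 0, w.
by move/IH => [n [w' [-> h]]]; exists n.+1, w'.
Qed.

Lemma pmap_nil (w : seq letter) : pmap id w = [::] -> w = nseq (size w) None.
Proof. by elim: w => [|[y|] w IH] //= /IH {1}->. Qed.

Section S.
Variables (a c : nat).
Local Notation K := [:: a; 1%N; c].

Lemma stepW0 lg C0 C1 C2 i :
  active K [:: C0; C1; C2] 0 -> ~~ active K [:: C0; C1; C2] 1 ->
  ~~ active K [:: C0; C1; C2] 2 ->
  fill_step lg K [:: C0; C1; C2] i None = [:: rcons C0 i; C1; C2].
Proof.
move=> h0 h1 h2; rewrite /fill_step.
have -> : [seq j <- iota 0 (size K) | active K [:: C0; C1; C2] j] = [:: 0].
  by rewrite /= h0 (negbTE h1) (negbTE h2).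
by [].
Qed.

Lemma stepW1 lg C0 C1 C2 i :
  ~~ active K [:: C0; C1; C2] 0 -> active K [:: C0; C1; C2] 1 ->
  ~~ active K [:: C0; C1; C2] 2 ->
  fill_step lg K [:: C0; C1; C2] i None = [:: C0; rcons C1 i; C2].
Proof.
move=> h0 h1 h2; rewrite /fill_step.
have -> : [seq j <- iota 0 (size K) | active K [:: C0; C1; C2] j] = [:: 1].
  by rewrite /= h1 (negbTE h0) (negbTE h2).
by [].
Qed.

Lemma stepW01 lg C0 C1 C2 i :
  active K [:: C0; C1; C2] 0 -> active K [:: C0; C1; C2] 1 ->
  ~~ active K [:: C0; C1; C2] 2 ->
  fill_step lg K [:: C0; C1; C2] i None =
  if (if lg then last 0 C0 < last 0 C1 else last 0 C1 < last 0 C0)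
  then [:: C0; rcons C1 i; C2] else [:: rcons C0 i; C1; C2].
Proof.
move=> h0 h1 h2; rewrite /fill_step.
have -> : [seq j <- iota 0 (size K) | active K [:: C0; C1; C2] j] = [:: 0; 1].
  by rewrite /= h0 h1 (negbTE h2).
by case: lg; rewrite /best_col /bottom /=; case: ifP.
Qed.

Lemma Run0 lg n C0 C1 s :
  ~~ active K [:: C0; C1; [::]] 1 -> 0 < size C0 -> size C0 + n <= a.+1 ->
  G lg K [:: C0; C1; [::]] s (nseq n None) = [:: C0 ++ iota s n; C1; [::]].
Proof.
elim: n C0 s => [|n IH] C0 s h1 h0 hs; first by rewrite cats0.
rewrite /= G_cons stepW0 //; last by rewrite /active /= h0; lia.
rewrite IH ?size_rcons -?cats1 -?catA //; lia.
Qed.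


Lemma best_col_mem better F js j : best_col better F js = Some j -> j \in js.
Proof.
rewrite /best_col.
have : forall acc, (forall j, acc = Some j -> j \in js) ->
  forall js', {subset js' <= js} ->
  foldl (fun acc j => match acc with
                      | None => Some j
                      | Some j' => if better (bottom F j) (bottom F j')
                                   then Some j else Some j'
                      end) acc js' = Some j -> j \in js.
  move=> acc Hacc js'; elim: js' acc Hacc => [|x js' IH] acc Hacc Hs /=.
    exact: Hacc.
  apply: IH; last by move=> y hy; apply: Hs; rewrite inE hy orbT.
  move=> y; case: acc Hacc => [j'|] Hacc.
    case: ifP => _ [<-]; [apply: Hs; exact: mem_head | exact: Hacc].
  by case=> <-; apply: Hs; exact: mem_head.
by move=> H; apply: H.
Qed.

Lemma stepW_gen lg C0 C1 C2 i : exists e0 e1 e2,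
  fill_step lg K [:: C0; C1; C2] i None = [:: C0 ++ e0; C1 ++ e1; C2 ++ e2] /\
  all (fun z => i <= z) (e0 ++ e1 ++ e2).
Proof.
rewrite /fill_step.
set o := best_col _ _ _.
have : forall j, o = Some j -> j < 3.
  move=> j /best_col_mem; rewrite mem_filter mem_iota /=; by case/andP.
case: o => [j|] Ho; last by exists [::], [::], [::]; rewrite !cats0.
have := Ho j erefl.
case: j {Ho} => [|[|[|j]]] // _ /=.
- by exists [:: i], [::], [::]; rewrite !cats0 cats1 /= leqnn.
- by exists [::], [:: i], [::]; rewrite !cats0 cats1 /= leqnn.
- by exists [::], [::], [:: i]; rewrite !cats0 cats1 /= leqnn.
Qed.

Lemma run_gen lg n s C0 C1 C2 : exists e0 e1 e2,
  G lg K [:: C0; C1; C2] s (nseq n None) = [:: C0 ++ e0; C1 ++ e1; C2 ++ e2] /\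
  all (fun z => s <= z) (e0 ++ e1 ++ e2).
Proof.
elim: n s C0 C1 C2 => [|n IH] s C0 C1 C2.
  by exists [::], [::], [::]; rewrite !cats0.
rewrite /= G_cons.
have [e0 [e1 [e2 [-> He]]]] := stepW_gen lg C0 C1 C2 s.
have [f0 [f1 [f2 [-> Hf]]]] := IH s.+1 (C0 ++ e0) (C1 ++ e1) (C2 ++ e2).
exists (e0 ++ f0), (e1 ++ f1), (e2 ++ f2); rewrite !catA; split => //.
move: He Hf; rewrite !all_cat => /and3P[-> -> ->] /and3P[h0 h1 h2] /=.
have W : forall e, all (fun z => s.+1 <= z) e -> all (fun z => s <= z) e.
  by move=> e /allP He; apply/allP => z /He; apply: ltnW.
by rewrite !W.
Qed.

Lemma TR (c0 d1 e0 e1 : seq nat) y (e2 : seq nat) :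
  0 < size d1 -> (head 0 d1).-1 \in c0 -> 0 < y -> all (fun z => y <= z) (e0 ++ e1) ->
  (y.-1 \in c0) || (y.-1 \in d1) ->
  sumn (top_ranks [:: c0 ++ e0; d1 ++ e1; y :: e2]) =
  index (head 0 d1).-1 c0 + (if y.-1 \in c0 then index y.-1 c0
                   else index (head 0 d1).-1 c0 + index y.-1 d1).
Proof.
move=> hd1 hx hy /allP He hY.
have Ne : forall e : seq nat, {subset e <= e0 ++ e1} -> (y.-1 \in e) = false.
  move=> e sub; apply/negbTE/negP => /sub /He; lia.
have Hh : head 0 (d1 ++ e1) = head 0 d1 by case: d1 hd1 {hx hY}.
rewrite /top_ranks /= Hh mem_cat hx /= index_cat hx.
have [h|h] := boolP (y.-1 \in c0).
  rewrite mem_cat h /= index_cat h; lia.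
move: hY; rewrite (negbTE h) /= => hY.
rewrite mem_cat (negbTE h) Ne /=; last by move=> z hz; rewrite mem_cat hz.
rewrite mem_cat hY /= index_cat hY.
lia.
Qed.

Lemma fill_val lg m1 m2 m3 (c0 d1 : seq nat) :
  m1 <= a ->
  G lg K [:: iota 1 m1.+1; [:: m1.+2]; [::]] m1.+3 (nseq m2 None) = [:: c0; d1; [::]] ->
  0 < size c0 -> 0 < size d1 -> head 0 d1 = m1.+2 -> m1.+1 \in c0 ->
  ((m1 + m2).+2 \in c0) || ((m1 + m2).+2 \in d1) ->
  sumn (top_ranks (fill lg K (Some 0 :: nseq m1 None ++ Some 1 :: nseq m2 None
                                ++ Some 2 :: nseq m3 None))) =
  index m1.+1 c0 + (if (m1 + m2).+2 \in c0 then index (m1 + m2).+2 c0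
                    else index m1.+1 c0 + index (m1 + m2).+2 d1).
Proof.
move=> hm1 HG hc0 hd1 hh hx hy.
rewrite fill_cons G_cat.
have -> : set_nth [::] (nseq (size K) [::]) 0 [:: 1] = [:: [:: 1]; [::]; [::]] by [].
rewrite Run0 //; try (by rewrite /active); try (by rewrite /=; lia).
rewrite G_cons size_nseq.
have -> : fill_step lg K [:: [:: 1] ++ iota 2 m1; [::]; [::]] (2 + m1) (Some 1)
  = [:: iota 1 m1.+1; [:: m1.+2]; [::]] by [].
rewrite G_cat size_nseq.
have -> : (2 + m1).+1 = m1.+3 by [].
rewrite HG G_cons.
have -> : fill_step lg K [:: c0; d1; [::]] (m1.+3 + m2) (Some 2)
  = [:: c0; d1; [:: (m1 + m2).+3]].
  by rewrite lt0n in hc0; rewrite lt0n in hd1; rewrite /fill_step /= (negbTE hc0) (negbTE hd1) /= addSn.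
have [e0 [e1 [e2 [-> He]]]] := run_gen lg m3 (m1.+3 + m2).+1 c0 d1 [:: (m1 + m2).+3].
rewrite cat1s TR //.
- by rewrite hh.
- by rewrite hh.
- by move: He; rewrite catA all_cat => /andP[H _]; apply: sub_all H => z /=; lia.
Qed.

Definition V m1 m2 := m1 + (if m2 == 0 then m1 else if m2 <= 2 then m1.+1 else m1 + m2 - 1).

Lemma fill_sum lg m1 m2 m3 : m1 <= a -> m1 + m2 <= a.+1 ->
  sumn (top_ranks (fill lg K (Some 0 :: nseq m1 None ++ Some 1 :: nseq m2 None
                                ++ Some 2 :: nseq m3 None))) = V m1 m2.
Proof.
move=> h1 h2.
have i1 : forall t, index m1.+1 (iota 1 m1.+1 ++ t) = m1.
  by move=> t; rewrite index_cat mem_iota ifT; [rewrite -add1n idx_iota | lia].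
have x1 : forall t, m1.+1 \in iota 1 m1.+1 ++ t.
  by move=> t; rewrite mem_cat mem_iota; apply/orP; left; lia.
case: m2 h2 => [|m2] h2.
  rewrite (@fill_val lg m1 0 m3 (iota 1 m1.+1) [:: m1.+2]) //; last first.
  - by rewrite addn0 mem_seq1 eqxx orbT.
  - by have := x1 [::]; rewrite cats0.
  have := i1 [::]; rewrite cats0 => ->.
  rewrite mem_iota ifF; last by lia.
  by rewrite /V addn0 /= eqxx /=; lia.
have [em1|lt1] := eqVneq m1 a.
  have e2 : m2 = 0 by lia.
  subst m2.
  have HG : G lg K [:: iota 1 m1.+1; [:: m1.+2]; [::]] m1.+3 (nseq 1 None)
            = [:: iota 1 m1.+1; [:: m1.+2; m1.+3]; [::]].
    rewrite /= G_cons stepW1 //.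
    by rewrite /active /= size_iota em1 ltnn.
  rewrite (@fill_val lg m1 _ m3 _ _ h1 HG) //; last first.
  - by rewrite !inE; apply/orP; right; apply/orP; right; lia.
  - by have := x1 [::]; rewrite cats0.
  have := i1 [::]; rewrite cats0 => ->.
  rewrite mem_iota ifF; last by lia.
  rewrite /= ifF; last by apply/negbTE; lia.
  rewrite ifT; last by lia.
  by rewrite /V /=; lia.
have lt1' : m1 < a by rewrite ltn_neqAle lt1 h1.
have a0 : active K [:: iota 1 m1.+1; [:: m1.+2]; [::]] 0.
  by rewrite /active /= size_iota; lia.
case: lg.
  have HG : G true K [:: iota 1 m1.+1; [:: m1.+2]; [::]] m1.+3 (nseq m2.+1 None)
            = [:: iota 1 m1.+1 ++ iota m1.+4 m2; [:: m1.+2; m1.+3]; [::]].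
    rewrite /= G_cons stepW01 // last_iota /= ifT; last by lia.
    rewrite Run0 // /= size_iota; lia.
  rewrite (@fill_val true m1 _ m3 _ _ h1 HG) //; last first.
  - rewrite !mem_cat !inE !mem_iota; lia.
  rewrite i1.
  case: m2 {h2 HG} => [|m2].
    rewrite cats0 mem_iota ifF; last by lia.
    rewrite /= ifF; last by apply/negbTE; lia.
    rewrite ifT; last by lia.
    by rewrite /V /=; lia.
  have hm : (m1 + m2.+2).+2 \in iota m1.+4 m2.+1 by rewrite mem_iota; lia.
  rewrite mem_cat hm orbT index_cat mem_iota ifF; last by lia.
  rewrite idx_iota2 ?size_iota; last by lia.
  rewrite /V /=; case: ifP => h; lia.
case: m2 h2 => [|m2] h2.
  have HG : G false K [:: iota 1 m1.+1; [:: m1.+2]; [::]] m1.+3 (nseq 1 None)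
            = [:: iota 1 m1.+1 ++ [:: m1.+3]; [:: m1.+2]; [::]].
    rewrite /= G_cons stepW01 // last_iota /= ifF; last by lia.
    by rewrite cats1.
  rewrite (@fill_val false m1 _ m3 _ _ h1 HG) //; last first.
  - rewrite !mem_cat !inE; lia.
  rewrite i1 mem_cat (_ : (m1 + 1).+2 \in [:: m1.+3]) ?orbT; last by rewrite inE; lia.
  rewrite index_cat mem_iota ifF; last by lia.
  rewrite size_iota /= ifT; last by lia.
  by rewrite /V /=; lia.
have HG : G false K [:: iota 1 m1.+1; [:: m1.+2]; [::]] m1.+3 (nseq m2.+2 None)
          = [:: rcons (iota 1 m1.+1) m1.+3 ++ iota m1.+4.+1 m2; [:: m1.+2; m1.+4]; [::]].
  rewrite /= G_cons stepW01 // last_iota /= ifF; last by lia.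
  rewrite G_cons.
  have -> : fill_step false K [:: rcons (iota 1 m1.+1) m1.+3; [:: m1.+2]; [::]] m1.+4 None
     = [:: rcons (iota 1 m1.+1) m1.+3; [:: m1.+2; m1.+4]; [::]].
    case: (ltnP m1.+1 a) => hh.
      rewrite stepW01 //; first by rewrite last_rcons /= ifT.
      by rewrite /active /= size_rcons size_iota; lia.
    rewrite stepW1 //.
    by rewrite /active /= size_rcons size_iota; lia.
  by rewrite Run0 // ?size_rcons ?size_iota; lia.
rewrite (@fill_val false m1 _ m3 _ _ h1 HG) //; last first.
- rewrite !mem_cat !inE !mem_iota; lia.
- by rewrite -cats1 -catA.
rewrite -cats1 -catA i1.
case: m2 {h2 HG} => [|m2].
  rewrite cats0 mem_cat mem_iota inE ifF; last by lia.
  rewrite /= ifF; last by apply/negbTE; lia.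
  rewrite ifT; last by lia.
  by rewrite /V /=; lia.
have hm : (m1 + m2.+3).+2 \in iota m1.+4.+1 m2.+1 by rewrite mem_iota; lia.
rewrite !mem_cat hm !orbT !index_cat mem_iota inE ifF; last by lia.
rewrite ifF; last by lia.
rewrite idx_iota2 ?size_iota; last by lia.
rewrite /V /=; lia.
Qed.

Definition fr := fun (x : letter) (acc : int) => (rstep K x + acc)%R.

Lemma FW s n z : foldr fr z (nseq n None ++ s) = (foldr fr z s - n%:Z)%R.
Proof.
elim: n => [|n IH] /=; first by rewrite subr0.
rewrite IH /fr /=; lia.
Qed.

Lemma sr_pre p q : start_rank K (p ++ q) (size p) = foldr fr 0%R p.
Proof. by rewrite /start_rank take_size_cat. Qed.

Lemma dyck_shape pi : is_dyck K pi -> exists m1 m2 m3,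
  pi = Some 0 :: nseq m1 None ++ Some 1 :: nseq m2 None ++ Some 2 :: nseq m3 None
  /\ m1 <= a /\ m1 + m2 <= a.+1.
Proof.
case/and3P => /eqP hp _ /allP hr.
have := @pmap_split _ _ _ hp => -[n0 [w1 [E1 h1]]].
have := @pmap_split _ _ _ h1 => -[m1 [w2 [E2 h2]]].
have := @pmap_split _ _ _ h2 => -[m2 [w3 [E3 h3]]].
have E4 := @pmap_nil _ h3.
set m3 := size w3 in E4.
rewrite E4 in E3; rewrite E3 in E2; rewrite E2 in E1.
have R : forall p q, pi = p ++ q -> 0 < size q -> (0 <= foldr fr 0%R p)%R.
  move=> p q E hq; rewrite -(sr_pre p q) -E; apply: hr.
  by rewrite mem_iota E size_cat; lia.
have n00 : n0 = 0.
  have := R (nseq n0 None) _ E1 isT; rewrite -[nseq n0 None]cats0 FW /=; lia.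
subst n0.
exists m1, m2, m3; split => //.
have := R (Some 0 :: nseq m1 None) _ E1 isT; rewrite -[nseq m1 None]cats0 /= FW /fr /= => ?.
have E1' : pi = (Some 0 :: nseq m1 None ++ Some 1 :: nseq m2 None) ++ (Some 2 :: nseq m3 None).
  by rewrite E1 /= -catA.
have := R _ _ E1' isT.
rewrite -[nseq m2 None]cats0 /= FW /fr /= FW /=.
lia.
Qed.

End S.

Local Open Scope ring_scope.

Theorem proposition5p6 (a c : nat) (ha : (0 < a)%N) (hc : (0 < c)%N) :
  (forall pi : seq letter, is_dyck [:: a; 1%N; c] pi ->
     depth [:: a; 1%N; c] pi = bounce [:: a; 1%N; c] pi) /\
  (forall (R : comNzRingType) (q t : R),
     \sum_(pi <- Dyck_words [:: a; 1%N; c])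
        q ^+ area [:: a; 1%N; c] pi * t ^+ depth [:: a; 1%N; c] pi
     = \sum_(pi <- Dyck_words [:: a; 1%N; c])
        q ^+ area [:: a; 1%N; c] pi * t ^+ bounce [:: a; 1%N; c] pi).
Proof.
have P1 : forall pi : seq letter, is_dyck [:: a; 1%N; c] pi ->
     depth [:: a; 1%N; c] pi = bounce [:: a; 1%N; c] pi.
  move=> pi /dyck_shape [m1 [m2 [m3 [-> [h1 h2]]]]].
  by rewrite /depth /bounce !fill_sum.
split => // R q t.
apply: eq_big_seq => pi hpi.
have : is_dyck [:: a; 1%N; c] pi.
  by move: hpi; rewrite /Dyck_words => /mapP [x]; rewrite mem_filter => /andP [hd _] ->.
by move/P1 ->.
Qed.
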